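(* Let $p$ be an integer such that $2p = q(q+1)$ for some integer $q$ with $q \neq 0$ and $q + 1 \neq 0$, and suppose $q$ cannot be written as $q_1(q_1+1)$ for an integer $q_1$. Then $3p^3$ is represented by the following two sums of three integer cubes: $$\{-p - 2p(1 + 1)\}^3 + \left\{p + 2p\left(1 + \frac{1}{2}\right)\right\}^3 + \left\{p + 2p\left(1 + \frac{1}{2}\right)\right\}^3 = 3p^3$$ and $$\left\{-p - 2p\left(q + \frac{1}{q}\right)\right\}^3 + \left\{p + 2p\left(q + \frac{1}{q+1}\right)\right\}^3 + \left\{p + 2p\left(\frac{1}{q} + \frac{q}{q+1}\right)\right\}^3 = 3p^3.$$ *)

(* Defs.v *)
From mathcomp Require Import all_boot all_order all_algebra.
Set Implicit Arguments. Unset Strict Implicit. Unset Printing Implicit Defensive.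

(* Main.v *)
Require Import Defs.
From mathcomp Require Import all_boot all_order all_algebra.
From mathcomp Require Import ring.
Import Order.TTheory GRing.Theory Num.Theory.
Local Open Scope ring_scope.

Theorem lemma3p3 (p q : int) :
  2 * p = q * (q + 1) -> q != 0 -> q + 1 != 0 ->
  ~ (exists q1 : int, q = q1 * (q1 + 1)) ->
  let P : rat := p%:~R in
  let Q : rat := q%:~R in
  let a1 := - P - 2 * P * (1 + 1) in
  let b1 := P + 2 * P * (1 + 1 / 2) in
  let c1 := P + 2 * P * (1 + 1 / 2) in
  let a2 := - P - 2 * P * (Q + 1 / Q) in
  let b2 := P + 2 * P * (Q + 1 / (Q + 1)) in
  let c2 := P + 2 * P * (1 / Q + Q / (Q + 1)) in
  ([/\ a1 \is a Num.int, b1 \is a Num.int, c1 \is a Num.int &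
      a1 ^+ 3 + b1 ^+ 3 + c1 ^+ 3 = 3 * P ^+ 3] /\
   [/\ a2 \is a Num.int, b2 \is a Num.int, c2 \is a Num.int &
      a2 ^+ 3 + b2 ^+ 3 + c2 ^+ 3 = 3 * P ^+ 3]).
Proof.
move=> hpq hq hq1 _ P Q a1 b1 c1 a2 b2 c2.
have hQ : Q != 0 by rewrite intr_eq0.
have hQ1 : Q + 1 != 0 by rewrite -[1]/((1:int)%:~R) -intrD intr_eq0.
have h2 : 2 * P = Q * (Q + 1).
  have := congr1 (fun z : int => z%:~R : rat) hpq.
  by rewrite /= !intrM intrD /P /Q.
have hP : P = Q * (Q + 1) / 2 by rewrite -h2; field.
have ea1 : a1 = (-5 * p)%:~R by rewrite /a1 intrM /P; ring.
have eb1 : b1 = (4 * p)%:~R by rewrite /b1 intrM /P; field.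
have ea2 : a2 = (- (p + 2 * p * q + q + 1))%:~R.
  rewrite /a2 intrN !intrD !intrM -/P -/Q hP; field; rewrite ?hQ ?hQ1 //=.
have eb2 : b2 = (p + 2 * p * q + q)%:~R.
  rewrite /b2 !intrD !intrM -/P -/Q hP; field; rewrite ?hQ ?hQ1 //=.
have ec2 : c2 = (p + q * q + q + 1)%:~R.
  rewrite /c2 !intrD !intrM -/P -/Q hP; field; rewrite ?hQ ?hQ1 //=.
split; split.
- by rewrite ea1 intr_int.
- by rewrite eb1 intr_int.
- by rewrite /c1 -/b1 eb1 intr_int.
- rewrite /c1 -/b1 ea1 eb1 intrM /P; ring.
- by rewrite ea2 intr_int.
- by rewrite eb2 intr_int.
- by rewrite ec2 intr_int.
- rewrite ea2 eb2 ec2 intrN !intrD !intrM -/P -/Q hP; field; rewrite ?hQ ?hQ1 //=.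
Qed.
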